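(* Let $A,B\subset\mathbb{R}^n$ be set-germs at $0$ with $0\in\overline{A}\cap\overline{B}$ and let $h:(\mathbb{R}^n,0)\to(\mathbb{R}^n,0)$ be a bi-Lipschitz homeomorphism (germ). If $A$ and $B$ are $ST$-equivalent, then $h(A)$ and $h(B)$ are $ST$-equivalent.
   Context: A bi-Lipschitz homeomorphism germ is a homeomorphism between neighbourhoods of $0$ fixing $0$ with $K_1|x-y|\le|h(x)-h(y)|\le K_2|x-y|$ for some $0<K_1\le K_2$ near $0$. Sea-tangle neighbourhood: $ST_d(A;C)=\{x\in\mathbb{R}^n : \mathrm{dist}(x,A)\le C|x|^d\}$ for $d,C>0$. $A$ and $B$ are $ST$-equivalent if there are $d_1,d_2>1$ and $C_1,C_2>0$ with $B\subset ST_{d_1}(A;C_1)$ and $A\subset ST_{d_2}(B;C_2)$ as germs at $0$ (after intersecting with some neighbourhood of $0$). *)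

(* Defs.v *)
From HB Require Import structures.
From mathcomp Require Import all_boot all_order all_algebra.
From mathcomp Require Import all_classical all_reals all_analysis.
Set Implicit Arguments. Unset Strict Implicit. Unset Printing Implicit Defensive.
Import Order.TTheory GRing.Theory Num.Theory.
Import numFieldNormedType.Exports.
Local Open Scope classical_set_scope.
Local Open Scope ring_scope.

Definition enorm {R : realType} {n : nat} (x : 'rV[R]_n) : R :=
  Num.sqrt (\sum_(i < n) x ord0 i ^+ 2).

Definition setdist {R : realType} {n : nat} (x : 'rV[R]_n) (A : set 'rV[R]_n) : R :=
  inf [set enorm (x - a) | a in A].

Definition ST {R : realType} {n : nat} (d C : R) (A : set 'rV[R]_n) : set 'rV[R]_n :=
  [set x | setdist x A <= C * (enorm x `^ d)].

Definition ball0 {R : realType} {n : nat} (r : R) : set 'rV[R]_n :=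
  [set x | enorm x < r].

Definition ST_equiv {R : realType} {n : nat} (A B : set 'rV[R]_n) : Prop :=
  exists d1 d2 C1 C2 r : R,
    1 < d1 /\ 1 < d2 /\ 0 < C1 /\ 0 < C2 /\ 0 < r /\
    (B `&` ball0 r `<=` ST d1 C1 A) /\
    (A `&` ball0 r `<=` ST d2 C2 B).

(* h : (R^n,0) -> (R^n,0) is a bi-Lipschitz homeomorphism germ defined on the
   open neighbourhood U of 0: h 0 = 0, h maps U onto an open neighbourhood of 0,
   and K1|x-y| <= |h x - h y| <= K2|x-y| on U (so h|_U is a homeomorphism
   onto its image). *)
Definition biLipschitz_germ {R : realType} {n : nat}
    (h : 'rV[R]_n -> 'rV[R]_n) (U : set 'rV[R]_n) : Prop :=
  open U /\ U 0 /\ h 0 = 0 /\ open (h @` U) /\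
  exists K1 K2 : R, 0 < K1 /\ K1 <= K2 /\
    (forall x y, U x -> U y ->
       K1 * enorm (x - y) <= enorm (h x - h y) /\
       enorm (h x - h y) <= K2 * enorm (x - y)).

(* Main.v *)
Require Import Defs.
From HB Require Import structures.
From mathcomp Require Import all_boot all_order all_algebra.
From mathcomp Require Import all_classical all_reals all_analysis.
From mathcomp Require Import lra ring.
Import Order.TTheory GRing.Theory Num.Theory.
Import numFieldNormedType.Exports.
Local Open Scope classical_set_scope.
Local Open Scope ring_scope.

Section Aux.
Variables (R : realType) (n : nat).
Implicit Types (x y a b : 'rV[R]_n) (A : set 'rV[R]_n).

Lemma enorm_ge0 x : 0 <= enorm x.
Proof. exact: sqrtr_ge0. Qed.

Lemma norm_le_enorm x : `|x| <= enorm x.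
Proof.
have -> : `|x| = mx_norm x by [].
rewrite mx_normrE; apply: bigmax_le; first exact: enorm_ge0.
move=> [i j] _ /=; rewrite (ord1 i) /enorm -sqrtr_sqr; apply: ler_wsqrtr.
rewrite (bigD1 j) //= lerDl; apply: sumr_ge0 => k _; exact: sqr_ge0.
Qed.

Lemma setdist_le x A a : A a -> setdist x A <= enorm (x - a).
Proof.
move=> Aa; rewrite /setdist; apply: ge_inf; last by exists a.
exists 0 => _ [c _ <-]; exact: enorm_ge0.
Qed.

Lemma setdist_adh x A e : A !=set0 -> 0 < e ->
  exists2 a, A a & enorm (x - a) < setdist x A + e.
Proof.
move=> [a0 Aa0] e0.
have hi : has_inf [set enorm (x - a) | a in A].
  split; first by exists (enorm (x - a0)), a0.
  by exists 0 => _ [c _ <-]; exact: enorm_ge0.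
have [_ [c Ac <-] H] := @inf_adherent R _ e e0 hi.
by exists c.
Qed.

Lemma powR_le_self (a d : R) : 0 <= a <= 1 -> 1 <= d -> a `^ d <= a.
Proof.
move=> /andP[a0 a1] d1; have [->|an0] := eqVneq a 0.
  by rewrite powR0 // gt_eqF // (lt_le_trans ltr01 d1).
by apply: ge1r_powR => //; rewrite a1 andbT lt_neqAle eq_sym an0.
Qed.
End Aux.
Arguments enorm_ge0 {R n}.
Arguments norm_le_enorm {R n}.
Arguments setdist_le {R n}.
Arguments setdist_adh {R n}.
Arguments powR_le_self {R}.

Section Half.
Variables (R : realType) (n : nat) (h : 'rV[R]_n -> 'rV[R]_n) (U : set 'rV[R]_n).
Variables (K1 K2 rho : R).
Hypothesis K10 : 0 < K1.
Hypothesis K12 : K1 <= K2.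
Hypothesis rho0 : 0 < rho.
Hypothesis h0 : h 0 = 0.
Hypothesis U0 : U 0.
Hypothesis Uball : forall x, `|x| < rho -> U x.
Hypothesis hL : forall x y, U x -> U y ->
       K1 * enorm (x - y) <= enorm (h x - h y) /\
       enorm (h x - h y) <= K2 * enorm (x - y).

Lemma dist_h (A : set 'rV[R]_n) b : A !=set0 -> U b ->
  enorm b + setdist b A < rho ->
  setdist (h b) (h @` (A `&` U)) <= K2 * setdist b A.
Proof.
move=> An0 Ub hb.
have K20 : 0 < K2 by exact: lt_le_trans K12.
apply/ler_addgt0Pr => e e0.
pose e' := Num.min (e / K2) ((rho - (enorm b + setdist b A)) / 2).
have e'0 : 0 < e'.
  by rewrite lt_min divr_gt0 //= divr_gt0 // subr_gt0.
have [a Aa ha] := setdist_adh b A e' An0 e'0.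
have Ua : U a.
  apply: Uball.
  have -> : a = b - (b - a) by rewrite opprB addrC subrK.
  apply: (le_lt_trans (ler_normB _ _)).
  apply: (le_lt_trans (lerD (norm_le_enorm b) (norm_le_enorm (b - a)))).
  have : e' <= (rho - (enorm b + setdist b A)) / 2 by rewrite ge_min lexx orbT.
  lra.
have H := setdist_le (h b) (h @` (A `&` U)) (h a) (ex_intro2 _ _ a (conj Aa Ua) erefl).
apply: (le_trans H); have [_ H2] := hL b a Ub Ua.
apply: (le_trans H2).
have : e' <= e / K2 by rewrite ge_min lexx.
move=> He'.
have : K2 * enorm (b - a) <= K2 * (setdist b A + e').
  by rewrite ler_pM2l // ltW.
have : K2 * e' <= e.
  by rewrite mulrC -ler_pdivlMr.
move=> H3 H4; rewrite mulrDr in H4; lra.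
Qed.

Lemma half (A B : set 'rV[R]_n) (d C r : R) : A !=set0 -> 1 < d -> 0 < C -> 0 < r ->
  (B `&` Defs.ball0 r `<=` ST d C A) ->
  exists C' r' : R, 0 < C' /\ 0 < r' /\
    (h @` (B `&` U) `&` Defs.ball0 r' `<=` ST d C' (h @` (A `&` U))).
Proof.
move=> An0 d1 C0 r0 hBA.
have K20 : 0 < K2 by exact: lt_le_trans K12.
have d0 : 0 < d by exact: lt_trans d1.
pose s := Num.min (Num.min r 1) (rho / 2 / (1 + C)).
have s0 : 0 < s by rewrite !lt_min r0 ltr01 /= !divr_gt0 // addr_gt0.
exists (K2 * C * (K1^-1 `^ d)), (K1 * s); split.
  by rewrite !mulr_gt0 // powR_gt0 // invr_gt0.
split; first by rewrite mulr_gt0.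
move=> _ [[b [Bb Ub] <-] hby]; rewrite /Defs.ball0 /= in hby; rewrite /ST /=.
have hbK : K1 * enorm b <= enorm (h b).
  by have [H _] := hL b 0 Ub U0; rewrite h0 !subr0 in H.
have eb0 := enorm_ge0 b.
have ebs : enorm b < s.
  by rewrite -(ltr_pM2l K10); apply: le_lt_trans hby.
have ebr : enorm b < r by apply: (lt_le_trans ebs); rewrite !ge_min lexx.
have eb1 : enorm b <= 1 by apply/ltW/(lt_le_trans ebs); rewrite !ge_min lexx orbT.
have ebrho : enorm b * (1 + C) < rho / 2.
  rewrite -ltr_pdivlMr ?addr_gt0 //; apply: (lt_le_trans ebs).
  by rewrite ge_min lexx orbT.
have hd : setdist b A <= C * enorm b `^ d by exact: (hBA b (conj Bb ebr)).
have hp : enorm b `^ d <= enorm b by apply: powR_le_self; rewrite ?eb0 ?eb1 // ltW.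
have hd2 : setdist b A <= C * enorm b.
  by apply: (le_trans hd); rewrite ler_pM2l.
have hlt : enorm b + setdist b A < rho.
  have : C * enorm b = enorm b * C by rewrite mulrC.
  rewrite mulrDr mulr1 in ebrho. move=> HH.
  apply: (le_lt_trans (lerD (lexx _) hd2)); rewrite HH; apply: (lt_trans ebrho).
  by rewrite ltr_pdivrMr // ltr_pMr // ltr1n.
apply: le_trans (dist_h A b An0 Ub hlt) _.
have hb' : enorm b <= enorm (h b) * K1^-1.
  by rewrite ler_pdivlMr // mulrC.
have hp2 : enorm b `^ d <= (enorm (h b) * K1^-1) `^ d.
  apply: ge0_ler_powR => //; rewrite ?ltW // nnegrE //.
  by rewrite mulr_ge0 ?enorm_ge0 // invr_ge0 ltW.
rewrite powRM ?enorm_ge0 ?invr_ge0 ?(ltW K10) // in hp2.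
have -> : K2 * C * K1^-1 `^ d * enorm (h b) `^ d =
  K2 * (C * (enorm (h b) `^ d * K1^-1 `^ d)) by rewrite !mulrA; ring.
rewrite ler_pM2l //; apply: (le_trans hd); rewrite ler_pM2l //.
Qed.

End Half.

Theorem proposition4p5 (R : realType) (n : nat) (A B : set 'rV[R]_n)
    (h : 'rV[R]_n -> 'rV[R]_n) (U : set 'rV[R]_n) :
  closure A 0 -> closure B 0 ->
  biLipschitz_germ h U ->
  ST_equiv A B ->
  ST_equiv (h @` (A `&` U)) (h @` (B `&` U)).
Proof.
move=> clA clB [oU [U0 [h0 [_ [K1 [K2 [K10 [K12 hL]]]]]]]].
move=> [d1 [d2 [C1 [C2 [r [d1g [d2g [C10 [C20 [r0 [hBA hAB]]]]]]]]]]].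
have : nbhs (0 : 'rV[R]_n) U by apply: open_nbhs_nbhs; split.
move=> /nbhs_normP [rho rho0 hrho].
have Uball : forall x : 'rV[R]_n, `|x| < rho -> U x.
  by move=> x hx; apply: hrho; rewrite /ball_ /= sub0r normrN.
have An0 : A !=set0 by have [x [Ax _]] := clA _ filterT; exists x.
have Bn0 : B !=set0 by have [x [Bx _]] := clB _ filterT; exists x.
have [C1' [r1 [C1'0 [r10 H1]]]] :=
  @half R n h U K1 K2 rho K10 K12 rho0 h0 U0 Uball hL A B d1 C1 r An0 d1g C10 r0 hBA.
have [C2' [r2 [C2'0 [r20 H2]]]] :=
  @half R n h U K1 K2 rho K10 K12 rho0 h0 U0 Uball hL B A d2 C2 r Bn0 d2g C20 r0 hAB.
exists d1, d2, C1', C2', (Num.min r1 r2); do 5 (split => //).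
  by rewrite lt_min r10.
split.
  move=> x [hx bx]; apply: H1; split => //; apply: (lt_le_trans bx).
  by rewrite ge_min lexx.
move=> x [hx bx]; apply: H2; split => //; apply: (lt_le_trans bx).
by rewrite ge_min lexx orbT.
Qed.
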